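(* There exist a nondeterministic planning domain $D$ and a goal $\psi$ which is an LTL$_f$ formula (equally read as an LTL formula) such that: (a) there is no policy $f$ with $(D,f)\models A^{\text{sa-fair}}\psi$, i.e., the state-action fair planning problem $\langle D,\psi\rangle$ has no solution; but (b) for every deterministic automaton $A_\psi$ over the alphabet $2^{\mathcal{F}\cup\mathcal{A}}$ accepting exactly the infinite traces that satisfy $\psi$, the state-action fair planning problem $\langle D',Acc\rangle$ has a solution, where $D'=D\times A_\psi$ is the synchronous product and $Acc$ is the goal consisting of those infinite traces of $D'$ whose projection to $D$ is accepted by $A_\psi$.
   Context: A nondeterministic planning domain is a tuple $D=(St,Act,s_0,Tr)$ with finite state set $St=2^{\mathcal{F}}$ (assignments to fluents $\mathcal{F}$), finite action set $Act=2^{\mathcal{A}}$, initial state $s_0$, and $Tr\subseteq St\times Act\times St$; every state has an applicable action. A trace is a finite or infinite sequence $(s_0\cup a_0)(s_1\cup a_1)\cdots$ starting at $s_0$ with $(s_{i-1},a_{i-1},s_i)\in Tr$. A policy is a function $f:St^+\to Act$ with $f(u)$ applicable in the last state of $u$; an $f$-trace is a trace with $f(s_0\cdots s_i)=a_i$ for all prefixes. LTL/LTL$_f$: usual syntax with atoms, $\neg$, $\wedge$, next $X$, until $U$; LTL$_f$ is interpreted on finite sequences ($X\psi$ at $j$ requires position $j+1$ to exist), and an infinite trace satisfies an LTL$_f$ formula if some finite prefix does. A goal is a set of infinite traces; a policy $f$ solves the state-action fair planning problem $\langle D,G\rangle$ if every infinite state-action fair $f$-trace is in $G$, where an infinite trace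 is state-action fair if for every transition $(s,a,s')\in Tr$, if $s,a$ occurs infinitely often then $s,a$ immediately followed by $s'$ occurs infinitely often. $(D,f)\models A^{\text{sa-fair}}\psi$ means $f$ solves the state-action fair problem with goal the set of traces satisfying $\psi$. A deterministic automaton is $(\Sigma,Q,q_0,\delta,\mathcal{C})$ with $\delta:Q\times\Sigma\to Q$, where an infinite word is accepted iff its unique run satisfies the acceptance condition $\mathcal{C}$ (of any type). The synchronous product $D\times A$ is the domain whose states are pairs $(d,q)$, initial state $(s_0,q_0)$, with a transition from $(d,q)$ to $(d',q')$ on action $a$ iff $(d,a,d')\in Tr$ and $\delta(q,d\cup a)=q'$; state-action fairness and policies in $D\times A$ are defined with respect to its own states and transitions. *)

(* Defs.v *)
From mathcomp Require Import all_boot.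
Set Implicit Arguments.
Unset Strict Implicit.
Unset Printing Implicit Defensive.

Definition inf_often (P : nat -> Prop) : Prop :=
  forall N, exists i, N <= i /\ P i.

Record domain (St Act : finType) := Domain {
  init : St;
  trans : St -> Act -> St -> bool;
  trans_total : forall s, exists a s', trans s a s'
}.

Section Domains.
Variables (St Act : finType) (D : domain St Act).

Definition applicable (s : St) (a : Act) : Prop := exists s', trans D s a s'.

(* infinite traces (s_0 u a_0)(s_1 u a_1)... represented as pairs *)
Definition is_trace (t : nat -> St * Act) : Prop :=
  (t 0).1 = init D /\ forall i, trans D (t i).1 (t i).2 (t i.+1).1.

Definition prefix (t : nat -> St * Act) (i : nat) : seq St :=
  [seq (t j).1 | j <- iota 0 i.+1].

(* policies f : St^+ -> Act (value on the empty sequence is irrelevant) *)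
Definition is_policy (f : seq St -> Act) : Prop :=
  forall u : seq St, u != [::] -> applicable (last (init D) u) (f u).

Definition is_ftrace (f : seq St -> Act) (t : nat -> St * Act) : Prop :=
  forall i, f (prefix t i) = (t i).2.

Definition sa_fair (t : nat -> St * Act) : Prop :=
  forall s a s', trans D s a s' ->
    inf_often (fun i => t i = (s, a)) ->
    inf_often (fun i => t i = (s, a) /\ (t i.+1).1 = s').

Definition solves (f : seq St -> Act) (G : (nat -> St * Act) -> Prop) : Prop :=
  forall t, is_trace t -> is_ftrace f t -> sa_fair t -> G t.

Definition solvable (G : (nat -> St * Act) -> Prop) : Prop :=
  exists f, is_policy f /\ solves f G.
End Domains.

Inductive ltl (X : Type) :=
| LAtom of X
| LNot of ltl X
| LAnd of ltl X & ltl X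
| LNext of ltl X
| LUntil of ltl X & ltl X.

(* satisfaction at position j of the finite prefix w_0 ... w_(n-1) of w *)
Fixpoint satf (X : Type) (w : nat -> X -> bool) (n j : nat) (phi : ltl X) : Prop :=
  match phi with
  | LAtom x => w j x
  | LNot p => ~ satf w n j p
  | LAnd p q => satf w n j p /\ satf w n j q
  | LNext p => j.+1 < n /\ satf w n j.+1 p
  | LUntil p q => exists k, j <= k < n /\ satf w n k q /\
                    forall l, j <= l < k -> satf w n l p
  end.

Definition ltlf_inf (X : Type) (w : nat -> X -> bool) (phi : ltl X) : Prop :=
  exists n, 0 < n /\ satf w n 0 phi.

(* letters of 2^(F u A) are pairs (state, action) *)
Definition letter (F A : finType) := ({set F} * {set A})%type.

Definition letter_val (F A : finType) (l : letter F A) (x : F + A) : bool :=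
  match x with inl f => f \in l.1 | inr p => p \in l.2 end.

Definition ltlf_goal (F A : finType) (psi : ltl (F + A))
  : (nat -> letter F A) -> Prop :=
  fun t => ltlf_inf (fun i => letter_val (t i)) psi.

Record dmuller (Sigma : Type) (Q : finType) := DMuller {
  q0 : Q;
  delta : Q -> Sigma -> Q;
  table : {set {set Q}}
}.

Fixpoint run (Sigma : Type) (Q : finType) (M : dmuller Sigma Q)
  (w : nat -> Sigma) (i : nat) : Q :=
  match i with
  | 0 => q0 M
  | i'.+1 => delta M (run M w i') (w i')
  end.

Definition accepts (Sigma : Type) (Q : finType) (M : dmuller Sigma Q)
  (w : nat -> Sigma) : Prop :=
  exists S : {set Q}, S \in table M /\
    forall q, q \in S <-> inf_often (fun i => run M w i = q).

Definition prod_trans (F A : finType) (Q : finType)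
  (D : domain {set F} {set A})
  (M : dmuller (letter F A) Q)
  (dq : {set F} * Q) (a : {set A}) (dq' : {set F} * Q) : bool :=
  trans D dq.1 a dq'.1 && (delta M dq.2 (dq.1, a) == dq'.2).

Lemma prod_total (F A : finType) (Q : finType)
  (D : domain {set F} {set A})
  (M : dmuller (letter F A) Q) :
  forall s, exists a s', prod_trans D M s a s'.
Proof.
move=> [d q]; have [a [d' H]] := trans_total D d.
by exists a, (d', delta M q (d, a)); rewrite /prod_trans /= H eqxx.
Qed.

Definition prod_dom (F A : finType) (Q : finType)
  (D : domain {set F} {set A})
  (M : dmuller (letter F A) Q) : domain ({set F} * Q)%type {set A} :=
  Domain (init D, q0 M) (@prod_total F A Q D M).

Definition Acc (F A : finType) (Q : finType) (M : dmuller (letter F A) Q)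
  : (nat -> ({set F} * Q) * {set A}) -> Prop :=
  fun t => accepts M (fun i => ((t i).1.1, (t i).2)).

(* Main.v *)
Require Import Defs.
From mathcomp Require Import all_boot.
From mathcomp Require Import zify.
From Stdlib Require Import Classical.
Set Implicit Arguments.

Definition pA : ltl (unit + void) := LAtom (inl tt).
Definition topf : ltl (unit + void) := LNot (LAnd pA (LNot pA)).
Definition psi0 : ltl (unit + void) :=
  LUntil topf (LAnd pA (LNext (LAnd pA (LNext pA)))).

Lemma goal_iff (w : nat -> letter unit void) :
  ltlf_goal psi0 w <->
  exists k, tt \in (w k).1 /\ tt \in (w k.+1).1 /\ tt \in (w k.+2).1.
Proof.
split.
- move=> [n [_ [k [_ [[H1 [_ [H2 [_ H3]]]] _]]]]].
  by exists k.
- move=> [k [H1 [H2 H3]]]; exists k.+3; split => //.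
  exists k; split; first by lia.
  split; last by move=> l _ [H H'].
  repeat split => //; lia.
Qed.

Lemma set_unit_cases (s : {set unit}) : s = set0 \/ s = setT.
Proof.
case: (boolP (tt \in s)) => H; [right|left]; apply/setP => -[].
  by rewrite inE H.
by rewrite inE (negbTE H).
Qed.

Lemma set_void (a : {set void}) : a = set0.
Proof. by apply/setP => -[]. Qed.

Lemma pigeon (T : finType) (P : nat -> Prop) (g : nat -> T) :
  inf_often P -> exists x, inf_often (fun i => P i /\ g i = x).
Proof.
move=> HP; apply: NNPP => H.
have: forall s : seq T, exists N, forall i, N <= i ->
          forall x, x \in s -> ~ (P i /\ g i = x).
  elim=> [|y s [N HN]]; first by exists 0 => i _ x; rewrite in_nil.
  have: ~ inf_often (fun i => P i /\ g i = y) by move=> Hy; apply H; exists y.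
  move/not_all_ex_not => [M HM].
  exists (maxn N M) => i Hi x; rewrite in_cons => /orP [/eqP -> | Hx] Hc.
    by apply HM; exists i; split => //; lia.
  by apply: (HN i _ x Hx Hc); lia.
move=> /(_ (enum T)) [N HN]; have [i [Hi Pi]] := HP N.
by apply: (HN i Hi (g i)) => //; rewrite mem_enum.
Qed.

Section Run.
Variables (Sigma : Type) (Q : finType) (M : dmuller Sigma Q).

Lemma run_prefix (w w' : nat -> Sigma) n :
  (forall k, k < n -> w k = w' k) -> run M w n = run M w' n.
Proof.
elim: n => //= n IH H; rewrite IH ?H //; move=> k Hk; apply H; lia.
Qed.

Lemma run_shift (w w' : nat -> Sigma) i i' :
  run M w i = run M w' i' -> (forall k, w (i+k) = w' (i'+k)) ->
  forall k, run M w (i+k) = run M w' (i'+k).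
Proof.
move=> H0 Hw; elim=> [|k IH]; first by rewrite !addn0.
by rewrite !addnS /= IH Hw.
Qed.

Lemma inf_shift (P P' : nat -> Prop) i i' :
  (forall k, P (i+k) -> P' (i'+k)) -> inf_often P -> inf_often P'.
Proof.
move=> H HP N; have [j [Hj Pj]] := HP (N + i).
exists (i' + (j - i)); split; first lia.
apply H; have -> : i + (j - i) = j by lia.
done.
Qed.

Lemma accepts_shift (w w' : nat -> Sigma) i i' :
  run M w i = run M w' i' -> (forall k, w (i+k) = w' (i'+k)) ->
  accepts M w -> accepts M w'.
Proof.
move=> H0 Hw [S [HS HSq]]; exists S; split => // q; rewrite HSq; split.
- apply: (@inf_shift _ _ i i') => k; by rewrite (@run_shift w w' i i' H0 Hw).
- apply: (@inf_shift _ _ i' i) => k; by rewrite (@run_shift w w' i i' H0 Hw).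
Qed.
End Run.

Definition Dtr (s : {set unit}) (a : {set void}) (s' : {set unit}) : bool := true.
Lemma Dtot : forall s : {set unit}, exists (a : {set void}) s', Dtr s a s'.
Proof. by move=> s; exists set0, set0. Qed.

Definition D0 : domain {set unit} {set void} := Domain set0 Dtot.

Definition sq (i : nat) : {set unit} :=
  if (i %% 4 == 1) || (i %% 4 == 2) then setT else set0.

Lemma sq_in i : (tt \in sq i) = (i %% 4 == 1) || (i %% 4 == 2).
Proof. by rewrite /sq; case: ifP; rewrite ?inE. Qed.

Lemma sq_val N r : r < 4 -> sq (N * 4 + r) = sq r.
Proof. by move=> Hr; rewrite /sq modnMDl. Qed.

Lemma partA : ~ solvable D0 (ltlf_goal psi0).
Proof.
move=> [f [_ Hf]].
pose t i := (sq i, set0 : {set void}).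
have : ltlf_goal psi0 t.
  apply: Hf.
  - by split => //=.
  - by move=> i; rewrite [f _]set_void.
  - move=> s a s' _ _ N; rewrite (set_void a).
    have Hs : forall r, r < 4 -> exists i, N <= i /\ sq i = sq r /\ sq i.+1 = sq r.+1.
      move=> r Hr; exists (N * 4 + r); split; first lia.
      rewrite sq_val //; split => //.
      case: (ltnP r.+1 4) => Hr'; first by rewrite -addnS sq_val.
      have -> : r = 3 by lia.
      by rewrite (_ : (N * 4 + 3).+1 = N.+1 * 4 + 0) ?sq_val //; lia.
    have E0 : sq 0 = set0 by [].
    have E1 : sq 1 = setT by [].
    have E2 : sq 2 = setT by [].
    have E3 : sq 3 = set0 by [].
    have E4 : sq 4 = set0 by [].
    case: (set_unit_cases s) => ->; case: (set_unit_cases s') => ->.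
    + have [i [Hi [H1 H2]]] := Hs 3 isT; exists i; rewrite /t H1 H2; done.
    + have [i [Hi [H1 H2]]] := Hs 0 isT; exists i; rewrite /t H1 H2; done.
    + have [i [Hi [H1 H2]]] := Hs 2 isT; exists i; rewrite /t H1 H2; done.
    + have [i [Hi [H1 H2]]] := Hs 1 isT; exists i; rewrite /t H1 H2; done.
move/goal_iff => [k []]; rewrite /t /= !sq_in; lia.
Qed.

Lemma partB (Q : finType) (M : dmuller (letter unit void) Q) :
  (forall w : nat -> letter unit void, accepts M w <-> ltlf_goal psi0 w) ->
  solvable (prod_dom D0 M) (Acc M).
Proof.
move=> HM; exists (fun _ => set0); split.
  move=> u _; exists (set0, delta M (last (init (prod_dom D0 M)) u).2
                      ((last (init (prod_dom D0 M)) u).1, set0)).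
  by rewrite /= /prod_trans /= eqxx.
move=> t [Ht0 Ht] _ Hfair.
rewrite /Acc; set w := (fun i => _).
rewrite HM goal_iff; apply: NNPP => Hno.
have run_eq : forall i, run M w i = (t i).1.2.
  elim=> [|i IH]; first by rewrite Ht0.
  move: (Ht i); rewrite /= /prod_trans => /andP [_ /eqP <-].
  by rewrite /= IH.
have tE : forall i, t i = ((t i).1, set0).
  by move=> i; case: (t i) => x a; rewrite (set_void a).
have ptr : forall d q d', trans (prod_dom D0 M) (d, q) set0 (d', delta M q (d, set0)).
  by move=> d q d'; rewrite /= /prod_trans /= eqxx.
have [q1 Hq1] : exists q1, inf_often (fun i => t i = ((setT, q1), set0)).
  have [x Hx] := @pigeon _ (fun _ => True) (fun i => (t i).1) (fun N => ex_intro _ N (conj (leqnn N) I)).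
  have Hx' : inf_often (fun i => t i = (x, set0)).
    by move=> N; have [i [Hi [_ E]]] := Hx N; exists i; rewrite tE E.
  case: x Hx Hx' => d q _ Hx'.
  case: (set_unit_cases d) => Ed; last by exists q; rewrite -Ed.
  have := Hfair _ _ _ (ptr d q setT) Hx'.
  move=> H; exists (delta M q (d, set0)) => N.
  have [i [Hi [_ E]]] := H N; exists i.+1; split; first lia.
  by rewrite tE E.
set q2 := delta M q1 (setT, set0).
have H2 := Hfair _ _ _ (ptr setT q1 setT) Hq1.
have [i0 [_ [Ei0 Ei01]]] := H2 0.
have Hq2 : inf_often (fun i => t i = ((setT, q2), set0)).
  move=> N; have [i [Hi [_ E]]] := H2 N; exists i.+1; split; first lia.
  by rewrite tE E.
have [j [_ [Ej Ej1]]] := Hfair _ _ _ (ptr setT q2 setT) Hq2 0.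
have pT : forall k, (t k).1.1 = setT -> tt \in (t k).1.1.
  by move=> k ->; rewrite inE.
case: (boolP ((0 < j) && (tt \in (t j.-1).1.1))) => Hj.
  move/andP: Hj => [Hj0 Hp]; apply: Hno; exists j.-1; rewrite /= prednK //.
  by split => //; split; apply: pT; rewrite ?Ej ?Ej1.
have hpd : 0 < j -> ~~ (tt \in (t j.-1).1.1).
  by move=> Hj0; move: Hj; rewrite Hj0.
pose v k : letter unit void := (if k < 2 then setT else set0, set0).
pose w1 k := if k <= i0 then w k else v (k - i0.+1).
pose w2 k := if k < j then w k else v (k - j).
have R1 : run M w1 i0.+1 = run M w2 j.
  rewrite (run_prefix M w1 w); last by move=> k Hk; rewrite /w1 ifT.
  rewrite (run_prefix M w2 w j); last by move=> k Hk; rewrite /w2 ifT.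
  by rewrite !run_eq Ej Ei01.
have Hsh : forall k, w1 (i0.+1 + k) = w2 (j + k).
  move=> k; rewrite /w1 /w2.
  have -> : (i0.+1 + k <= i0) = false by apply/negbTE; rewrite -ltnNge; lia.
  have -> : (j + k < j) = false by apply/negbTE; rewrite -leqNgt; lia.
  by rewrite !addKn.
have acc1 : accepts M w1.
  rewrite HM goal_iff; exists i0.
  rewrite /w1 leqnn ltnn.
  have -> : (i0.+2 <= i0) = false by apply/negbTE; rewrite -ltnNge; lia.
  rewrite subnn (_ : i0.+2 - i0.+1 = 1); last by lia.
  by rewrite /= pT ?Ei0 // !inE.
have := accepts_shift w2 (i0.+1) j R1 Hsh acc1.
rewrite HM goal_iff => -[k [G1 [G2 G3]]].
have Hb : forall m, tt \in (w2 m).1 ->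
    (m < j /\ tt \in (t m).1.1) \/ (j <= m /\ m - j < 2).
  move=> m; rewrite /w2; case: ifP => Hm /=; first by left.
  case: ifP => Hm2; rewrite ?inE // => _; right; split => //; lia.
case: (Hb _ G1) => [[Ha Pa]|[Ha Pa]];
case: (Hb _ G2) => [[Hb' Pb]|[Hb' Pb]];
case: (Hb _ G3) => [[Hc Pc]|[Hc Pc]]; try lia.
- by apply: Hno; exists k.
- have Ek : k.+1 = j.-1 by lia.
  by move: (hpd ltac:(lia)); rewrite -Ek Pb.
- have Ek : k = j.-1 by lia.
  by move: (hpd ltac:(lia)); rewrite -Ek Pa.
Qed.

Theorem theorem1 :
  exists (F A : finType)
         (D : domain {set F} {set A})
         (psi : ltl (F + A)),
    ~ solvable D (ltlf_goal psi) /\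
    (forall (Q : finType) (M : dmuller (letter F A) Q),
       (forall w : nat -> letter F A, accepts M w <-> ltlf_goal psi w) ->
       solvable (prod_dom D M) (Acc M)).
Proof.
exists unit, void, D0, psi0; split; [exact: partA | exact: partB].
Qed.
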